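(* Let $X$ be a compact metric space, $Y\subseteq\mathbb{R}$, and $\rho$ a Borel probability measure on $X\times Y$ with marginal $\rho_X$ (such that the error quantities below are finite). Let $K:X\times X\to\mathbb{R}$ be a positive-definite reproducing kernel on $X$ with $K(\cdot,x)\in C(X)$, such that the closed linear span of $\{K(\cdot,x):x\in X\}$ in $C(X)$ equals $C(X)$, and such that for every $m$ and every pairwise distinct ${\bf x}=(x_1,\dots,x_m)$ in $X$, $\|K[{\bf x}]^{-1}K_{\bf x}(x)\|_1\le 1$ for all $x\in X$, where $(K[{\bf x}])_{j,k}=K(x_k,x_j)$ and $K_{\bf x}(x)=(K(x,x_j))_{j=1}^m$. Let $\mathcal{B}=\{f_\mu=\int_X K(t,\cdot)\,d\mu(t):\mu\in\mathcal{M}(X)\}$ with $\|f_\mu\|_{\mathcal B}=\|\mu\|$ (total variation), $\mathcal{M}(X)$ being the signed Borel measures on $X$ of bounded total variation. Let ${\bf z}=\{(x_j,y_j)\}_{j=1}^m\subseteq X\times Y$ with $x_j$ pairwise distinct, $\lambda>0$, let $\boldsymbol{c}_{{\bf z},\lambda}$ minimize $\frac1m\sum_{j=1}^m|K^{\bf x}(x_j)\boldsymbol{c}-y_j|^2+\lambda\|\boldsymbol{c}\|_1$ over $\boldsymbol{c}\in\mathbb{R}^m$, where $K^{\bf x}(x)=(K(x_j,x))_{j=1}^m$ (row vector), and $f_{{\bf z},\lambda}=K^{\bf x}(\cdot)\boldsymbol{c}_{{\bf z},\lambda}$. Then for all $g\in\mathcal{B}$, $$\mathcal{E}(f_{{\bf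 z},\lambda})-\mathcal{E}(f_\rho)\le\mathcal{S}({\bf z},\lambda,g)+\mathcal{D}(\lambda,g).$$
   Context: $\mathcal{E}(f)=\int_{X\times Y}|f(x)-y|^2\,d\rho$, $\mathcal{E}_{\bf z}(f)=\frac1m\sum_{j=1}^m(f(x_j)-y_j)^2$, $f_\rho(x)=\int_Y y\,d\rho(y|x)$ is the regression function. The sampling error is $\mathcal{S}({\bf z},\lambda,g)=\mathcal{E}(f_{{\bf z},\lambda})-\mathcal{E}_{\bf z}(f_{{\bf z},\lambda})+\mathcal{E}_{\bf z}(g)-\mathcal{E}(g)$ and the regularization error is $\mathcal{D}(\lambda,g)=\mathcal{E}(g)-\mathcal{E}(f_\rho)+\lambda\|g\|_{\mathcal B}$. *)

(* Defs.v *)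
From HB Require Import structures.
From mathcomp Require Import all_boot all_order all_algebra.
From mathcomp Require Import all_classical all_reals all_analysis.
Set Implicit Arguments. Unset Strict Implicit. Unset Printing Implicit Defensive.
Import Order.TTheory GRing.Theory Num.Theory.
Import numFieldNormedType.Exports.
Local Open Scope classical_set_scope.
Local Open Scope ring_scope.

Definition borelType (X : ptopologicalType) : Type := g_sigma_algebraType (@open X).

Section charges.
Context {d} {T : measurableType d} {R : realType}.

Definition cintegral (nu : {charge set T -> \bar R}) (f : T -> R) : \bar R :=
  let: exist P hP := cid (Hahn_decomposition nu) in
  let: exist N hPN := cid hP in
  (\int[jordan_pos hPN]_t (f t)%:E - \int[jordan_neg hPN]_t (f t)%:E)%E.

Definition charge_tv_norm (nu : {charge set T -> \bar R}) : R :=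
  let: exist P hP := cid (Hahn_decomposition nu) in
  let: exist N hPN := cid hP in
  fine (charge_variation hPN [set: T]).
End charges.

Section kernel_defs.
Context {R : realType} {X : Type} (K : X -> X -> R).

Definition Kmat m (x : 'I_m -> X) : 'M[R]_m := \matrix_(j, k) K (x k) (x j).
Definition Kcol m (x : 'I_m -> X) (t : X) : 'cV[R]_m := \col_j K t (x j).
Definition Krow m (x : 'I_m -> X) (t : X) : 'rV[R]_m := \row_j K (x j) t.

Definition l1norm m (v : 'cV[R]_m) : R := \sum_j `|v j 0|.

Definition pd_reproducing_kernel : Prop :=
  (forall s t, K s t = K t s) /\
  forall m (x : 'I_m -> X), injective x ->
    forall c : 'cV[R]_m, c != 0 -> 0 < (c^T *m Kmat x *m c) 0 0.
End kernel_defs.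

Section learning.
Context {R : realType} {X : ptopologicalType}.

(* the closed linear span of {K(.,t) : t in X} in (C(X), sup-norm) is C(X) *)
Definition kernel_span_dense (K : X -> X -> R) : Prop :=
  forall f : X -> R, continuous f -> forall e : R, 0 < e ->
    exists n (a : 'I_n -> R) (t : 'I_n -> X),
      forall s, `|f s - \sum_(i < n) a i * K s (t i)| < e.

Definition emp_error m (x : 'I_m -> X) (y : 'I_m -> R) (f : X -> R) : R :=
  (m%:R)^-1 * \sum_(j < m) (f (x j) - y j) ^+ 2.

Definition l1_objective (K : X -> X -> R) m (x : 'I_m -> X) (y : 'I_m -> R)
    (lam : R) (c : 'cV[R]_m) : R :=
  (m%:R)^-1 * \sum_(j < m) ((Krow K x (x j) *m c) 0 0 - y j) ^+ 2
  + lam * l1norm c.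

Definition kernel_expansion (K : X -> X -> R) m (x : 'I_m -> X) (c : 'cV[R]_m)
  : X -> R := fun t => (Krow K x t *m c) 0 0.

Definition f_of_measure (K : X -> X -> R)
    (mu : {charge set borelType X -> \bar R}) : X -> R :=
  fun s => fine (cintegral mu (fun t : borelType X => K t s)).

Variable rho : probability (borelType X * R)%type R.

Definition gen_error_ext (f : X -> R) : \bar R :=
  (\int[rho]_p ((f p.1 - p.2) ^+ 2)%:E)%E.
Definition gen_error (f : X -> R) : R := fine (gen_error_ext f).

Definition conditional_distribution (k : R.-pker (borelType X) ~> R) : Prop :=
  forall (A : set (borelType X)) (B : set R), measurable A -> measurable B ->
    rho (A `*` B) = (\int[pushforward rho fst]_(x in A) k x B)%E.

Definition regression_function (k : R.-pker (borelType X) ~> R) : X -> R :=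
  fun x => fine (\int[k x]_v v%:E)%E.
Definition sampling_error m (x : 'I_m -> X) (y : 'I_m -> R) (fz g : X -> R) : R :=
  gen_error fz - emp_error x y fz + emp_error x y g - gen_error g.

(* regularization error D(lambda, g), where gnorm = ||g||_B *)
Definition regularization_error (frho : X -> R) (lam : R) (g : X -> R) (gnorm : R)
  : R := gen_error g - gen_error frho + lam * gnorm.
End learning.

(* Main.v *)
Require Import Defs.
From HB Require Import structures.
From mathcomp Require Import all_boot all_order all_algebra.
From mathcomp Require Import all_classical all_reals all_analysis.
From mathcomp Require Import measurable_realfun.
From mathcomp Require Import lra.
Import Order.TTheory GRing.Theory Num.Theory.
Import numFieldNormedType.Exports.
Local Open Scope classical_set_scope.
Local Open Scope ring_scope.

Lemma cont_meas (R : realType) (X : ptopologicalType) (f : X -> R) :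
  continuous f -> measurable_fun [set: borelType X] (f : borelType X -> R).
Proof.
move=> /continuousP cf.
have := (@measurability _ _ (borelType X) R setT f _ (RGenOpens.measurableE R)).
apply.
move=> _ [_ [a [b ->]] <-]; rewrite setTI.
apply: sub_sigma_algebra; apply: cf; exact: interval_open.
Qed.

Section fm.
Context d (T : measurableType d) (R : realType).
Variable mu : {finite_measure set T -> \bar R}.

Lemma bint (f : T -> R) M : measurable_fun setT f -> (forall t, `|f t| <= M) ->
  mu.-integrable setT (EFin \o f).
Proof.
move=> mf fM; apply: (@le_integrable _ _ _ mu _ _ _ (EFin \o cst M)) => //.
- exact/measurable_EFinP.
- move=> t _ /=; rewrite lee_fin; apply: le_trans (fM t) _.
  exact: ler_norm.
- exact: finite_measure_integrable_cst.
Qed.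

Lemma int_sum I (s : seq I) (h : I -> T -> R) :
  (forall i, mu.-integrable setT (EFin \o h i)) ->
  mu.-integrable setT (EFin \o (fun t => \sum_(i <- s) h i t)) /\
  \int[mu]_t (\sum_(i <- s) h i t) = \sum_(i <- s) \int[mu]_t h i t.
Proof.
move=> hi; elim: s => [|i s [ih1 ih2]].
  under eq_fun do rewrite big_nil.
  rewrite big_nil; split; first exact: finite_measure_integrable_cst.
  by rewrite Rintegral_cst // mul0r.
under eq_fun do rewrite big_cons.
split.
  have -> : EFin \o (fun t => h i t + \sum_(j <- s) h j t) =
     (EFin \o h i) \+ (EFin \o (fun t => \sum_(j <- s) h j t)).
    by apply/funext => t.
  exact: integrableD.
rewrite big_cons -ih2.
have -> : (fun t => h i t + \sum_(j <- s) h j t) =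
   (fun t => h i t + (fun t => \sum_(j <- s) h j t) t) by [].
by rewrite RintegralD.
Qed.
End fm.

Lemma intZ d (T : measurableType d) (R : realType) (mu : {measure set T -> \bar R})
  (f : T -> R) k : mu.-integrable setT (EFin \o f) ->
  mu.-integrable setT (EFin \o (fun t => k * f t)).
Proof.
move=> hf; have := integrableZl measurableT k hf.
by have -> : (fun x => (k%:E * (EFin \o f) x)%E) = EFin \o (fun t => k * f t)
  by apply/funext => t /=; rewrite EFinM.
Qed.

Lemma interp (R : realType) (X : ptopologicalType) (K : X -> X -> R) m
  (x : 'I_m -> X) (mu : {charge set borelType X -> \bar R}) :
  Kmat K x \in unitmx ->
  (forall t : X, continuous (fun s : X => K s t)) ->
  (forall t : X, l1norm (invmx (Kmat K x) *m Kcol K x t) <= 1) ->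
  exists c' : 'cV[R]_m,
    (forall j, (Krow K x (x j) *m c') 0 0 = f_of_measure K mu (x j)) /\
    l1norm c' <= charge_tv_norm mu.
Proof.
move=> uA hcont hl1.
rewrite /f_of_measure /cintegral /charge_tv_norm.
case: (cid (Hahn_decomposition mu)) => P hP.
case: (cid hP) => N hPN /=.
set mup := jordan_pos hPN; set mun := jordan_neg hPN.
set A := Kmat K x; set B := invmx A.
pose v i (t : borelType X) := (B *m Kcol K x t) i 0.
have vE i t : v i t = \sum_l B i l * K t (x l).
  by rewrite /v mxE; apply: eq_bigr => l _; rewrite mxE.
have mK l : measurable_fun setT (fun t : borelType X => K t (x l)).
  exact: cont_meas (hcont (x l)).
have mv i : measurable_fun setT (v i).
  have -> : v i = (fun t => \sum_l B i l * K t (x l)) by apply/funext => t; rewrite vE.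
  apply: measurable_sum => l; apply: measurable_funM => //.
have vb i t : `|v i t| <= 1.
  apply: le_trans (hl1 t); rewrite /l1norm (bigD1 i) //= lerDl.
  by apply: sumr_ge0 => j _; exact: normr_ge0.
have Kv l t : K t (x l) = \sum_i A l i * v i t.
  have e : Kcol K x t = A *m (B *m Kcol K x t) by rewrite mulKVmx.
  have -> : K t (x l) = Kcol K x t l 0 by rewrite mxE.
  by rewrite {1}e mxE.
have iK (nu : {finite_measure set borelType X -> \bar R}) l :
    nu.-integrable setT (EFin \o (fun t => K t (x l))).
  apply: (@bint _ _ _ nu _ (\sum_i `|A l i|)) => // t.
  rewrite Kv; apply: le_trans (ler_norm_sum _ _ _) _.
  apply: ler_sum => i _; rewrite normrM.
  by rewrite -[leRHS]mulr1 ler_wpM2l // vb.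
have iv (nu : {finite_measure set borelType X -> \bar R}) i :
    nu.-integrable setT (EFin \o v i).
  exact: (@bint _ _ _ nu _ 1).
have ia (nu : {finite_measure set borelType X -> \bar R}) i :
    nu.-integrable setT (EFin \o (fun t => `|v i t|)).
  apply: (@bint _ _ _ nu _ (1)) => // [|t]; last by rewrite normr_id.
  exact: measurableT_comp.
have isum (nu : {finite_measure set borelType X -> \bar R}) :
    nu.-integrable setT (EFin \o (fun t => \sum_i `|v i t|)).
  apply: (@bint _ _ _ nu _ (1)) => // [|t].
    by apply: measurable_sum => i; exact: measurableT_comp.
  rewrite ger0_norm; last by apply: sumr_ge0 => i _; exact: normr_ge0.
  apply: le_trans (hl1 t); rewrite /l1norm.
  by apply: ler_sum => i _.
have vint (nu : {finite_measure set borelType X -> \bar R}) i :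
    \int[nu]_t v i t = \sum_l B i l * \int[nu]_t K t (x l).
  rewrite (eq_Rintegral _ (g := fun t : borelType X => \sum_l B i l * K t (x l))); last first.
    by move=> t _; rewrite vE.
  rewrite (@int_sum _ _ _ nu _ _ (fun l (t : borelType X) => B i l * K t (x l)) _).2; last first.
    by move=> l; apply: intZ; exact: iK.
  apply: eq_bigr => l _; rewrite RintegralZl //; exact: iK.
pose gv : 'cV[R]_m := \col_l (\int[mup]_t K t (x l) - \int[mun]_t K t (x l)).
exists (B *m gv); split.
  move=> j; rewrite fineB; [|by apply: integrable_fin_num => //; exact: iK|by apply: integrable_fin_num => //; exact: iK].
  transitivity ((A *m (B *m gv)) j 0).
    by rewrite !mxE; apply: eq_bigr => k _; rewrite !mxE.
  by rewrite mulKVmx // mxE.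
have ci i : (B *m gv) i 0 = \int[mup]_t v i t - \int[mun]_t v i t.
  rewrite !vint mxE -sumrB; apply: eq_bigr => l _; by rewrite mxE mulrBr.
rewrite /l1norm.
under eq_bigr do rewrite ci.
apply: (@le_trans _ _ (\sum_i (\int[mup]_t `|v i t| + \int[mun]_t `|v i t|))).
  apply: ler_sum => i _; apply: le_trans (ler_normB _ _) _.
  by apply: lerD; apply: le_normr_Rintegral => //; exact: iv.
rewrite big_split /=.
rewrite -(@int_sum _ _ _ mup _ _ (fun i t => `|v i t|) _).2; last exact: ia.
rewrite -(@int_sum _ _ _ mun _ _ (fun i t => `|v i t|) _).2; last exact: ia.
have hb (nu : {finite_measure set borelType X -> \bar R}) :
    \int[nu]_t (\sum_i `|v i t|) <= fine (nu setT).
  apply: (@le_trans _ _ (\int[nu]_t (1:R))).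
    apply: le_Rintegral => //; [exact: isum|exact: finite_measure_integrable_cst|].
    by move=> t _; apply: le_trans (hl1 t); apply: ler_sum.
  by rewrite Rintegral_cst // mul1r.
rewrite /charge_variation /= fineD; [|exact: fin_num_measure|exact: fin_num_measure].
by apply: lerD; apply: hb.
Qed.

Theorem lemma3p1 (R : realType) (X : pseudoPMetricType R) (Y : set R)
  (rho : probability (borelType X * R)%type R)
  (k : R.-pker (borelType X) ~> R) (K : X -> X -> R) :
  hausdorff_space X -> compact [set: X] ->
  rho.-negligible ([set: borelType X] `*` ~` Y) ->
  conditional_distribution rho k ->
  pd_reproducing_kernel K ->
  (forall t : X, continuous (fun s : X => K s t)) ->
  kernel_span_dense K ->
  (forall m (x : 'I_m -> X), injective x ->
     forall t : X, l1norm (invmx (Kmat K x) *m Kcol K x t) <= 1) ->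
  forall (m : nat) (x : 'I_m -> X) (y : 'I_m -> R),
  (0 < m)%N -> injective x -> (forall j, Y (y j)) ->
  forall lam : R, 0 < lam ->
  forall c : 'cV[R]_m,
  (forall c' : 'cV[R]_m, l1_objective K x y lam c <= l1_objective K x y lam c') ->
  forall mu : {charge set borelType X -> \bar R},
  let fz := kernel_expansion K x c in
  let g := f_of_measure K mu in
  let frho := regression_function k in
  gen_error_ext rho fz \is a fin_num ->
  gen_error_ext rho g \is a fin_num ->
  gen_error_ext rho frho \is a fin_num ->
  gen_error rho fz - gen_error rho frho <=
    sampling_error rho x y fz g
    + regularization_error rho frho lam g (charge_tv_norm mu).
Proof.
move=> _ _ _ _ hpd hcont _ hl1 m x y _ injx _ lam lam0 c hmin mu fz g frho _ _ _.
have uA : Kmat K x \in unitmx.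
  rewrite unitmxE unitfE; apply/negP => /det0P [r rn0 rA].
  have := hpd.2 m x injx r^T.
  rewrite trmx_eq0 rn0 trmxK rA mul0mx mxE => /(_ isT).
  by rewrite ltxx.
have [c' [hc' hn]] := @interp R X K m x mu uA hcont (hl1 m x injx).
have h1 : emp_error x y fz + lam * l1norm c <= emp_error x y g + lam * l1norm c'.
  apply: le_trans (hmin c') _; rewrite /l1_objective /emp_error.
  rewrite lerD2r; rewrite (eq_bigr (fun j => (g (x j) - y j) ^+ 2)) //.
  by move=> j _; rewrite hc'.
have h2 : 0 <= lam * l1norm c.
  apply: mulr_ge0; first exact: ltW.
  by rewrite /l1norm; apply: sumr_ge0 => j _; exact: normr_ge0.
have h3 : lam * l1norm c' <= lam * charge_tv_norm mu.
  by rewrite ler_pM2l.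
rewrite /sampling_error /regularization_error.
lra.
Qed.
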